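(* Let $0<p<\tfrac12$ and let $Q=(q_{j,k})_{j,k\geq 0}$ be the generator on $\mathbb N_0$ given by $q_{j,j+1}=jp$, $q_{j,k}=\binom{j}{k}p^k(1-p)^{j-k}$ for $0\leq k\leq j-1$, $q_{j,j}=-(jp+1-p^j)$, and $q_{j,k}=0$ otherwise. Then $x_k=k$ ($k\geq1$) is a $(1-2p)$-invariant vector for $Q$, i.e. a positive vector $x=(x_k)_{k\geq1}$ with $\sum_{k\geq 1}q_{j,k}x_k=-(1-2p)x_j$ for all $j\geq1$, and any $(1-2p)$-invariant vector for $Q$ is a positive multiple of this one.
   Context: A $\lambda$-invariant vector for $Q$ is a positive right eigenvector of $Q$ restricted to $\mathbb N=\{1,2,\dots\}$ with eigenvalue $-\lambda$. *)

(* Defs.v *)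
From Stdlib Require Import Reals Arith.
From Coquelicot Require Import Coquelicot.
Open Scope R_scope.

Definition binom (j k : nat) : R := Stdlib.Reals.Binomial.C j k.

Definition qgen (p : R) (j k : nat) : R :=
  if Nat.eqb k (S j) then INR j * p
  else if Nat.ltb k j then binom j k * p ^ k * (1 - p) ^ (j - k)
  else if Nat.eqb k j then - (INR j * p + 1 - p ^ j)
  else 0.

(* Vectors are
   functions nat -> R; only the entries with index >= 1 matter. *)
Definition invariant_vector (Q : nat -> nat -> R) (lam : R) (x : nat -> R) : Prop :=
  (forall k : nat, (1 <= k)%nat -> 0 < x k) /\
  (forall j : nat, (1 <= j)%nat ->
     is_series (fun k : nat => if Nat.eqb k 0 then 0 else Q j k * x k) (- lam * x j)).

(* Main.v *)
Require Import Defs.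
From Stdlib Require Import Reals Arith Lia Lra.
From Coquelicot Require Import Coquelicot.
Open Scope R_scope.

Lemma is_series_fin (a : nat -> R) n :
  (forall k, (n < k)%nat -> a k = 0) -> is_series a (sum_f_R0 a n).
Proof.
  intros H. unfold is_series.
  apply (filterlim_ext_loc (fun _ => sum_f_R0 a n)).
  - exists n. intros m Hm. rewrite sum_n_Reals.
    induction Hm; [reflexivity|]. rewrite tech5, H by lia. rewrite IHHm. ring.
  - apply filterlim_const.
Qed.

Lemma qgen_lt p j k : (k < j)%nat -> qgen p j k = binom j k * p ^ k * (1 - p) ^ (j - k).
Proof.
  intros H. unfold qgen.
  replace (Nat.eqb k (S j)) with false by (symmetry; apply Nat.eqb_neq; lia).
  replace (Nat.ltb k j) with true by (symmetry; apply Nat.ltb_lt; lia). reflexivity.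
Qed.

Lemma qgen_eq p j : qgen p j j = - (INR j * p + 1 - p ^ j).
Proof.
  unfold qgen.
  replace (Nat.eqb j (S j)) with false by (symmetry; apply Nat.eqb_neq; lia).
  replace (Nat.ltb j j) with false by (symmetry; apply Nat.ltb_nlt; lia).
  rewrite Nat.eqb_refl. reflexivity.
Qed.

Lemma qgen_S p j : qgen p j (S j) = INR j * p.
Proof. unfold qgen. rewrite Nat.eqb_refl. reflexivity. Qed.

Lemma qgen_gt p j k : (S j < k)%nat -> qgen p j k = 0.
Proof.
  intros H. unfold qgen.
  replace (Nat.eqb k (S j)) with false by (symmetry; apply Nat.eqb_neq; lia).
  replace (Nat.ltb k j) with false by (symmetry; apply Nat.ltb_nlt; lia).
  replace (Nat.eqb k j) with false by (symmetry; apply Nat.eqb_neq; lia).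
  reflexivity.
Qed.

Definition lowsum p m (x : nat -> R) :=
  sum_f_R0 (fun k => if Nat.eqb k 0 then 0 else binom (S m) k * p ^ k * (1 - p) ^ (S m - k) * x k) m.

Lemma row_sum p m (x : nat -> R) :
  is_series (fun k : nat => if Nat.eqb k 0 then 0 else qgen p (S m) k * x k)
    (lowsum p m x - (INR (S m) * p + 1 - p ^ (S m)) * x (S m) + INR (S m) * p * x (S (S m))).
Proof.
  set (F := fun k : nat => if Nat.eqb k 0 then 0 else qgen p (S m) k * x k).
  assert (E : sum_f_R0 F (S (S m)) =
    lowsum p m x - (INR (S m) * p + 1 - p ^ (S m)) * x (S m) + INR (S m) * p * x (S (S m))).
  { rewrite !tech5. unfold F at 2 3. simpl Nat.eqb. cbv iota.
    rewrite qgen_eq, qgen_S. unfold lowsum.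
    rewrite (sum_eq F (fun k => if Nat.eqb k 0 then 0 else binom (S m) k * p ^ k * (1 - p) ^ (S m - k) * x k)).
    - ring.
    - intros i Hi. unfold F. destruct (Nat.eqb i 0); [reflexivity|]. rewrite qgen_lt by lia. reflexivity. }
  rewrite <- E. apply is_series_fin. intros k Hk. unfold F.
  destruct (Nat.eqb k 0); [reflexivity|]. rewrite qgen_gt by lia. ring.
Qed.

Lemma C_n_n n : Binomial.C n n = 1.
Proof. unfold Binomial.C. rewrite Nat.sub_diag. simpl. field. apply INR_fact_neq_0. Qed.

Lemma C_S n i : (i <= n)%nat -> INR (S i) * Binomial.C (S n) (S i) = INR (S n) * Binomial.C n i.
Proof.
  intros H. unfold Binomial.C. replace (S n - S i)%nat with (n - i)%nat by lia.
  rewrite !fact_simpl, !mult_INR.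
  pose proof (INR_fact_neq_0 n). pose proof (INR_fact_neq_0 i).
  pose proof (INR_fact_neq_0 (n - i)). pose proof (not_0_INR (S i) ltac:(lia)).
  field. repeat split; auto.
Qed.

Lemma mean_binom p n :
  sum_f_R0 (fun k => INR k * Binomial.C (S n) k * p ^ k * (1 - p) ^ (S n - k)) (S n) = INR (S n) * p.
Proof.
  rewrite decomp_sum by lia. simpl pred. simpl INR at 1. rewrite Rmult_0_l, !Rmult_0_l, Rplus_0_l.
  rewrite (sum_eq _ (fun i => (Binomial.C n i * p ^ i * (1 - p) ^ (n - i)) * (INR (S n) * p))).
  - rewrite <- scal_sum, <- binomial. replace (p + (1 - p)) with 1 by ring. rewrite pow1. ring.
  - intros i Hi. replace (S n - S i)%nat with (n - i)%nat by lia.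
    rewrite C_S by lia. simpl pow. ring.
Qed.

Lemma lowsum_INR p m : lowsum p m INR = INR (S m) * p - INR (S m) * p ^ (S m).
Proof.
  unfold lowsum.
  rewrite (sum_eq _ (fun k => INR k * Binomial.C (S m) k * p ^ k * (1 - p) ^ (S m - k))).
  - pose proof (mean_binom p m) as H. rewrite tech5 in H.
    rewrite Nat.sub_diag, C_n_n, pow_O in H. lra.
  - intros i Hi. unfold binom. destruct (Nat.eqb i 0) eqn:E.
    + apply Nat.eqb_eq in E. subst. simpl. ring.
    + ring.
Qed.

Theorem lemma3 (p : R) (hp0 : 0 < p) (hp1 : p < 1 / 2) :
  invariant_vector (qgen p) (1 - 2 * p) (fun k : nat => INR k) /\
  (forall x : nat -> R, invariant_vector (qgen p) (1 - 2 * p) x ->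
     exists c : R, 0 < c /\ forall k : nat, (1 <= k)%nat -> x k = c * INR k).
Proof.
  split.
  - split.
    + intros k Hk. apply lt_0_INR. lia.
    + intros j Hj. destruct j as [|m]; [lia|].
      pose proof (row_sum p m INR) as H. rewrite lowsum_INR in H.
      replace (- (1 - 2 * p) * INR (S m)) with
        (INR (S m) * p - INR (S m) * p ^ S m - (INR (S m) * p + 1 - p ^ S m) * INR (S m) +
         INR (S m) * p * INR (S (S m))); [exact H|].
      rewrite (S_INR (S m)). ring.
  - intros x [Hpos Hser]. exists (x 1%nat). split; [apply Hpos; lia|].
    set (c := x 1%nat).
    assert (Hall : forall n k, (1 <= k <= n)%nat -> x k = c * INR k).
    { induction n as [|n IH]; intros k Hk; [lia|].
      destruct (Nat.eq_dec k (S n)) as [->|Hne]; [|apply IH; lia].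
      destruct n as [|m]. { simpl. unfold c. ring. }
      pose proof (row_sum p m x) as H1. pose proof (Hser (S m) ltac:(lia)) as H2.
      apply is_series_unique in H1. apply is_series_unique in H2.
      rewrite H1 in H2. clear H1.
      pose proof (row_sum p m INR) as H3. rewrite lowsum_INR in H3.
      assert (L : lowsum p m x = c * lowsum p m INR).
      { unfold lowsum. rewrite scal_sum. apply sum_eq. intros i Hi.
        destruct (Nat.eqb i 0) eqn:E; [ring|].
        apply Nat.eqb_neq in E. rewrite (IH i) by lia. ring. }
      rewrite L, lowsum_INR in H2.
      assert (Hb : 0 < INR (S m) * p).
      { apply Rmult_lt_0_compat; [apply lt_0_INR; lia|exact hp0]. }
      apply Rmult_eq_reg_l with (INR (S m) * p); [|lra].
      rewrite (IH (S m)) in H2 by lia.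
      set (I := INR (S m)) in *. set (X := x (S (S m))) in *.
      assert (E : I * p * X = - (1 - 2 * p) * (c * I) - c * (I * p - I * p ^ S m)
                  + (I * p + 1 - p ^ S m) * (c * I)) by lra.
      rewrite E. rewrite (S_INR (S m)). fold I. ring. }
    intros k Hk. apply (Hall k). lia.
Qed.
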